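(* Let $f_\theta(t)=\frac{\pi}{4}-\bigl(\frac{\pi}{4}-\theta_0\bigr)\cos\bigl(\frac{2\pi}{T}t\bigr)$ and $f_r(t)=\frac{\pi}{2}+\bigl(\frac{\pi}{2}-r_0\bigr)\sin\bigl(\frac{2\pi}{T}t\bigr)$. Then: (i) $\theta$ and $f_\theta$ have the same symmetries (both are $T$-periodic, even, symmetric about $t=T/2$, and point-symmetric about $(T/4,\pi/4)$ and $(3T/4,\pi/4)$) and the same critical points, and $\theta'(t)>0$ iff $f_\theta'(t)>0$; (ii) $r$ and $f_r$ have the same symmetries (both are $T$-periodic, symmetric about $t=T/4$ and $t=3T/4$, and point-symmetric about $(0,\pi/2)$ and $(T/2,\pi/2)$) and the same critical points, and $r'(t)>0$ iff $f_r'(t)>0$; (iii) $\cos\alpha(t)$ and $\cos\bigl(\frac{2\pi}{T}t\bigr)$ have the same symmetries and the same critical points and are strictly increasing, respectively strictly decreasing, on the same intervals; (iv) $\sin\alpha(t)$ and $\sin\bigl(\frac{2\pi}{T}t\bigr)$ have the same symmetries and the same critical points and are strictly increasing, respectively strictly decreasing, on the same intervals.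
   Context: Fix an integer $n>1$. Consider the system $r'=\cos\alpha$, $\theta'=\sin\alpha/\sin r$, $\alpha'=(2n-2)\csc r\,\cos\alpha\,\cot(2\theta)-(2n-1)\cot r\,\sin\alpha$. By Carlotto–Schulz, there exist $T>0$ and $r_0\in(0,\pi)$ such that the solution with $\theta(0)=\pi/4$, $r(0)=r_0$, $\alpha(0)=-\pi/2$ satisfies $\theta(T/4)>0$, $r(T/4)=\pi/2$, $\alpha(T/4)=0$, and on $[0,T/4]$ the function $\theta$ is strictly decreasing while $r$ and $\alpha$ are strictly increasing. Moreover (Carlotto–Schulz symmetries) the graph of $\theta$ is symmetric about $t=T/4$ and $t=3T/4$ and point-symmetric about $(T/2,\pi/4)$ and $(0,\pi/4)$; the graph of $r$ is symmetric about $t=0$ and $t=T/2$ and point-symmetric about $(T/4,\pi/2)$ and $(3T/4,\pi/2)$; $\theta,r$ are $T$-periodic and $\alpha(t+T)=\alpha(t)+2\pi$. Now translate this solution by $T/4$ in time (i.e. replace $t$ by $t+T/4$), so that $r(0)=\pi/2$, $\alpha(0)=0$, and $\theta_0:=\theta(0)$ is the minimum of $\theta$, with $0<\theta_0<\pi/4$; then $r_0=r(-T/4)$. All statements refer to this translated solution $(r,\theta,\alpha)$. *)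

(* Defs.v *)
From Stdlib Require Import Reals Lra.
From Coquelicot Require Import Coquelicot.
Open Scope R_scope.

Definition cot (x : R) : R := cos x / sin x.

Definition periodic (f : R -> R) (T : R) : Prop := forall t, f (t + T) = f t.
Definition sym_about (f : R -> R) (a : R) : Prop := forall t, f (a + t) = f (a - t).
Definition psym_about (f : R -> R) (a c : R) : Prop :=
  forall t, f (a + t) + f (a - t) = 2 * c.

Definition strictly_incr_on (f : R -> R) (a b : R) : Prop :=
  forall x y, a <= x -> x < y -> y <= b -> f x < f y.
Definition strictly_decr_on (f : R -> R) (a b : R) : Prop :=
  forall x y, a <= x -> x < y -> y <= b -> f y < f x.

Definition solves_system (n : nat) (r th al : R -> R) : Prop :=
  forall t,
    is_derive r t (cos (al t)) /\
    is_derive th t (sin (al t) / sin (r t)) /\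
    is_derive al t
      ((2 * INR n - 2) * / sin (r t) * cos (al t) * cot (2 * th t)
       - (2 * INR n - 1) * cot (r t) * sin (al t)).

Definition theta_syms (f : R -> R) (T : R) : Prop :=
  periodic f T /\ sym_about f 0 /\ sym_about f (T / 2) /\
  psym_about f (T / 4) (PI / 4) /\ psym_about f (3 * T / 4) (PI / 4).
Definition r_syms (f : R -> R) (T : R) : Prop :=
  periodic f T /\ sym_about f (T / 4) /\ sym_about f (3 * T / 4) /\
  psym_about f 0 (PI / 2) /\ psym_about f (T / 2) (PI / 2).
Definition cos_syms (f : R -> R) (T : R) : Prop :=
  periodic f T /\ sym_about f 0 /\ sym_about f (T / 2) /\
  psym_about f (T / 4) 0 /\ psym_about f (3 * T / 4) 0.
Definition sin_syms (f : R -> R) (T : R) : Prop :=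
  periodic f T /\ sym_about f (T / 4) /\ sym_about f (3 * T / 4) /\
  psym_about f 0 0 /\ psym_about f (T / 2) 0.

Definition same_critical_points (f g : R -> R) : Prop :=
  forall t, Derive f t = 0 <-> Derive g t = 0.

Definition same_monotonicity (f g : R -> R) : Prop :=
  forall a b, a < b ->
    (strictly_incr_on f a b <-> strictly_incr_on g a b) /\
    (strictly_decr_on f a b <-> strictly_decr_on g a b).

(* Main.v *)
Require Import Defs.
From Stdlib Require Import Reals Lra Lia.
From Coquelicot Require Import Coquelicot.
Open Scope R_scope.

Lemma Zper (f : R -> R) p : (forall t, f (t + p) = f t) ->
  forall (k : Z) t, f (t + IZR k * p) = f t.
Proof.
  intros H k. induction k using Z.peano_ind; intros t.
  - f_equal; lra.
  - rewrite succ_IZR. replace (t + (IZR k + 1) * p) with ((t + IZR k * p) + p) by ring.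
    rewrite H; auto.
  - replace (Z.pred k) with (k - 1)%Z by lia. rewrite minus_IZR.
    rewrite <- H. replace (t + (IZR k - 1) * p + p) with (t + IZR k * p) by ring.
    apply IHk.
Qed.

Lemma Zadd (f : R -> R) p q : (forall t, f (t + p) = f t + q) ->
  forall (k : Z) t, f (t + IZR k * p) = f t + IZR k * q.
Proof.
  intros H k. induction k using Z.peano_ind; intros t.
  - replace (t + 0 * p) with t by ring. ring.
  - rewrite succ_IZR. replace (t + (IZR k + 1) * p) with ((t + IZR k * p) + p) by ring.
    rewrite H, IHk. ring.
  - replace (Z.pred k) with (k - 1)%Z by lia. rewrite minus_IZR.
    assert (E := H (t + (IZR k - 1) * p)).
    replace (t + (IZR k - 1) * p + p) with (t + IZR k * p) in E by ring.
    rewrite IHk in E. lra.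
Qed.

Lemma floorZ p t : 0 < p -> exists k : Z, 0 <= t + IZR k * p < p.
Proof.
  intros Hp. destruct (base_Int_part (t / p)) as [H1 H2].
  exists (- Int_part (t / p))%Z. rewrite opp_IZR.
  set (m := IZR (Int_part (t / p))) in *.
  assert (m * p <= t).
  { apply Rle_trans with (t / p * p). apply Rmult_le_compat_r; lra. right; field; lra. }
  assert (t < m * p + p).
  { apply Rle_lt_trans with ((t/p) * p). right; field; lra.
    replace (m * p + p) with ((m + 1) * p) by ring. apply Rmult_lt_compat_r; lra. }
  split; nra.
Qed.

Lemma cos_2PI_plus x : cos (x + 2 * PI) = cos x.
Proof. rewrite cos_plus, cos_2PI, sin_2PI. ring. Qed.
Lemma sin_2PI_plus x : sin (x + 2 * PI) = sin x.
Proof. rewrite sin_plus, cos_2PI, sin_2PI. ring. Qed.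
Lemma cosZ k x : cos (x + IZR k * (2 * PI)) = cos x.
Proof. apply (Zper cos (2*PI)). apply cos_2PI_plus. Qed.
Lemma sinZ k x : sin (x + IZR k * (2 * PI)) = sin x.
Proof. apply (Zper sin (2*PI)). apply sin_2PI_plus. Qed.
Lemma cos_mPI2 x : cos (x + IZR (-1) * (PI/2)) = sin x.
Proof. replace (x + IZR (-1) * (PI/2)) with (x - PI/2) by (simpl IZR; lra).
  rewrite cos_minus, cos_PI2, sin_PI2. ring. Qed.
Definition Hh (h : R -> R) c T := (forall x y, x < y -> h x < h y) /\
  forall k : Z, h (c + IZR k * (T/4)) = IZR k * (PI/2).

Lemma Hh_lt h c T t j : Hh h c T -> (h t < IZR j * (PI/2) <-> t < c + IZR j * (T/4)).
Proof.
  intros [M V]. split; intro H.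
  - destruct (Rlt_or_le t (c + IZR j * (T/4))) as [|H']; auto. exfalso.
    destruct (Rle_lt_or_eq_dec _ _ H') as [H''|H''].
    + apply M in H''. rewrite V in H''. lra.
    + rewrite <- H'', V in H. lra.
  - rewrite <- V. apply M; auto.
Qed.

Lemma Hh_gt h c T t j : Hh h c T -> (IZR j * (PI/2) < h t <-> c + IZR j * (T/4) < t).
Proof.
  intros [M V]. split; intro H.
  - destruct (Rlt_or_le (c + IZR j * (T/4)) t) as [|H']; auto. exfalso.
    destruct (Rle_lt_or_eq_dec _ _ H') as [H''|H''].
    + apply M in H''. rewrite V in H''. lra.
    + rewrite H'', V in H. lra.
  - rewrite <- V. apply M; auto.
Qed.

Lemma Hh_le h c T t j : Hh h c T -> (h t <= IZR j * (PI/2) <-> t <= c + IZR j * (T/4)).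
Proof.
  intros HH. pose proof (Hh_gt h c T t j HH). split; intro H1.
  - apply Rnot_lt_le. intro H2. apply H in H2. lra.
  - apply Rnot_lt_le. intro H2. apply H in H2. lra.
Qed.

Lemma Hh_ge h c T t j : Hh h c T -> (IZR j * (PI/2) <= h t <-> c + IZR j * (T/4) <= t).
Proof.
  intros HH. pose proof (Hh_lt h c T t j HH). split; intro H1.
  - apply Rnot_lt_le. intro H2. apply H in H2. lra.
  - apply Rnot_lt_le. intro H2. apply H in H2. lra.
Qed.

Lemma Hh_eq h c T t j : Hh h c T -> (h t = IZR j * (PI/2) <-> t = c + IZR j * (T/4)).
Proof.
  intros HH. pose proof (Hh_le h c T t j HH). pose proof (Hh_ge h c T t j HH).
  split; intro; apply Rle_antisym; try apply H; try apply H0; lra.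
Qed.

Lemma Hh_shift h c T m : Hh h c T ->
  Hh (fun t => h t + IZR m * (PI/2)) (c - IZR m * (T/4)) T.
Proof.
  intros [M V]. split.
  - intros x y Hxy. apply M in Hxy. lra.
  - intros k. replace (c - IZR m * (T/4) + IZR k * (T/4)) with (c + IZR (k - m) * (T/4))
      by (rewrite minus_IZR; ring).
    rewrite V, minus_IZR. ring.
Qed.

Lemma cos_pos_char x : 0 < cos x <->
  exists k, IZR (4*k-1)*(PI/2) < x < IZR (4*k+1)*(PI/2).
Proof.
  split.
  - intros H. destruct (floorZ (2*PI) (x + PI/2)) as [m Hm]. pose proof PI_RGT_0; lra.
    rewrite <- (cosZ m) in H.
    destruct (Rlt_or_le (x + IZR m * (2 * PI)) (PI/2)) as [H1|H1].
    + assert (x + PI/2 + IZR m * (2*PI) <> 0).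
      { intro E. replace (x + IZR m * (2 * PI)) with (- (PI/2)) in H by lra.
        rewrite cos_neg, cos_PI2 in H. lra. }
      exists (-m)%Z. rewrite minus_IZR, plus_IZR, mult_IZR, opp_IZR. split; lra.
    + exfalso. assert (cos (x + IZR m * (2 * PI)) <= 0). apply cos_le_0; lra. lra.
  - intros [k Hk]. rewrite minus_IZR, plus_IZR, mult_IZR in Hk.
    rewrite <- (cosZ (-k)). rewrite opp_IZR. apply cos_gt_0; lra.
Qed.

Lemma cos_zero_char x : cos x = 0 <-> exists k, x = IZR (2*k+1)*(PI/2).
Proof.
  split.
  - intros H. destruct (cos_eq_0_0 x H) as [k Hk]. exists k.
    rewrite plus_IZR, mult_IZR. lra.
  - intros [k Hk]. apply cos_eq_0_1. exists k. rewrite plus_IZR, mult_IZR in Hk. lra.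
Qed.

Lemma cos_pos_transfer h1 h2 c T t : Hh h1 c T -> Hh h2 c T ->
  (0 < cos (h1 t) <-> 0 < cos (h2 t)).
Proof.
  intros H1 H2. rewrite !cos_pos_char. split; intros [k [Ha Hb]]; exists k.
  - rewrite (Hh_gt _ _ _ _ _ H1) in Ha. rewrite (Hh_lt _ _ _ _ _ H1) in Hb.
    rewrite (Hh_gt _ _ _ _ _ H2), (Hh_lt _ _ _ _ _ H2). auto.
  - rewrite (Hh_gt _ _ _ _ _ H2) in Ha. rewrite (Hh_lt _ _ _ _ _ H2) in Hb.
    rewrite (Hh_gt _ _ _ _ _ H1), (Hh_lt _ _ _ _ _ H1). auto.
Qed.

Lemma cos_zero_transfer h1 h2 c T t : Hh h1 c T -> Hh h2 c T ->
  (cos (h1 t) = 0 <-> cos (h2 t) = 0).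
Proof.
  intros H1 H2. rewrite !cos_zero_char. split; intros [k Hk]; exists k.
  - rewrite (Hh_eq _ _ _ _ _ H1) in Hk. rewrite (Hh_eq _ _ _ _ _ H2). auto.
  - rewrite (Hh_eq _ _ _ _ _ H2) in Hk. rewrite (Hh_eq _ _ _ _ _ H1). auto.
Qed.

Lemma cos_incr_char h c T a b : Hh h c T -> 0 < T -> a < b ->
  (strictly_incr_on (fun t => cos (h t)) a b <->
   exists k, c + IZR (4*k+2) * (T/4) <= a /\ b <= c + IZR (4*k+4) * (T/4)).
Proof.
  intros HH HT Hab. pose proof PI_RGT_0 as HPI. split.
  - intros Hi. destruct (floorZ T (a - c - T/2) HT) as [m Hm].
    exists (- m)%Z. rewrite !plus_IZR, !mult_IZR, !opp_IZR.
    destruct (Rlt_or_le a (c + (4 * - IZR m + 4) * (T/4))) as [Ha|Ha].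
    + split. lra.
      destruct (Rle_or_lt b (c + (4 * - IZR m + 4) * (T / 4))) as [|Hb]; auto.
      exfalso. set (x0 := c + (4 * - IZR m + 4) * (T / 4)).
      assert (Hx0 : a <= x0) by (unfold x0; lra).
      assert (Hx := Hi x0 b Hx0 Hb (Rle_refl b)). simpl in Hx.
      assert (hx0 : h x0 = IZR (4 * (-m) + 4) * (PI/2)).
      { apply (Hh_eq _ _ _ _ _ HH). unfold x0. rewrite !plus_IZR, !mult_IZR, !opp_IZR. ring. }
      rewrite hx0 in Hx.
      replace (IZR (4 * - m + 4) * (PI / 2)) with (0 + IZR (-m + 1) * (2 * PI)) in Hx
        by (rewrite !plus_IZR, !mult_IZR, !opp_IZR; lra).
      rewrite cosZ, cos_0 in Hx. pose proof (COS_bound (h b)). lra.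
    + exfalso. set (y := Rmin b (c + (4 * - IZR m + 6) * (T / 4))).
      assert (Hy1 : a < y). { unfold y. apply Rmin_glb_lt; lra. }
      assert (Hy2 : y <= b) by apply Rmin_l.
      assert (Hy3 : y <= c + (4 * - IZR m + 6) * (T / 4)) by apply Rmin_r.
      assert (Hc := Hi a y (Rle_refl a) Hy1 Hy2). simpl in Hc.
      assert (A1 : IZR (4 * -m + 4) * (PI/2) <= h a).
      { apply (Hh_ge _ _ _ _ _ HH). rewrite !plus_IZR, !mult_IZR, !opp_IZR. lra. }
      assert (A2 : h y <= IZR (4 * -m + 6) * (PI/2)).
      { apply (Hh_le _ _ _ _ _ HH). rewrite !plus_IZR, !mult_IZR, !opp_IZR. lra. }
      assert (A3 : h a < h y) by (apply (proj1 HH); auto).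
      rewrite !plus_IZR, !mult_IZR, !opp_IZR in A1, A2.
      rewrite <- (cosZ (m - 1) (h a)), <- (cosZ (m - 1) (h y)) in Hc.
      rewrite minus_IZR in Hc.
      assert (cos (h y + (IZR m - 1) * (2 * PI)) < cos (h a + (IZR m - 1) * (2 * PI))).
      { apply cos_decreasing_1; lra. }
      lra.
  - intros [k [Hk1 Hk2]] x y Hx Hxy Hy.
    assert (A1 : IZR (4 * k + 2) * (PI/2) <= h x).
    { apply (Hh_ge _ _ _ _ _ HH). lra. }
    assert (A2 : h y <= IZR (4 * k + 4) * (PI/2)).
    { apply (Hh_le _ _ _ _ _ HH). lra. }
    assert (A3 : h x < h y) by (apply (proj1 HH); auto).
    rewrite !plus_IZR, !mult_IZR in A1, A2.
    rewrite <- (cosZ (-k) (h x)), <- (cosZ (-k) (h y)). rewrite opp_IZR.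
    apply cos_increasing_1; lra.
Qed.

Lemma cos_incr_transfer h1 h2 c T a b : Hh h1 c T -> Hh h2 c T -> 0 < T -> a < b ->
  (strictly_incr_on (fun t => cos (h1 t)) a b <-> strictly_incr_on (fun t => cos (h2 t)) a b).
Proof.
  intros H1 H2 HT Hab. rewrite (cos_incr_char _ _ _ _ _ H1 HT Hab), (cos_incr_char _ _ _ _ _ H2 HT Hab).
  tauto.
Qed.
Lemma is_derive_aff (f : R -> R) (a s t l : R) : is_derive f (a + s * t) l ->
  is_derive (fun u => f (a + s * u)) t (s * l).
Proof.
  intros H. assert (Hg : is_derive (fun u => a + s * u) t s).
  { auto_derive; auto; ring. }
  exact (is_derive_comp f (fun u => a + s * u) t l s H Hg).
Qed.

Lemma is_derive_tr (f : R -> R) (c t l : R) : is_derive f (t + c) l -> is_derive (fun u => f (u + c)) t l.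
Proof.
  intros H. assert (H' : is_derive (fun u => f (c + 1 * u)) t (1 * l)).
  { apply is_derive_aff. replace (c + 1 * t) with (t + c) by ring. auto. }
  rewrite Rmult_1_l in H'. eapply is_derive_ext; [|exact H'].
  intros u. simpl. f_equal. ring.
Qed.

Lemma derive_uniq (f : R -> R) (x l1 l2 : R) : is_derive f x l1 -> is_derive f x l2 -> l1 = l2.
Proof. intros H1 H2. apply is_derive_unique in H1. apply is_derive_unique in H2. congruence. Qed.

Lemma d_sym (f d : R -> R) (a : R) : (forall t, is_derive f t (d t)) -> sym_about f a ->
  forall t, d (a + t) = - d (a - t).
Proof.
  intros Hd Hs t.
  assert (H1 : is_derive (fun u => f (a + 1 * u)) t (1 * d (a + 1 * t))) by (apply is_derive_aff; auto).
  assert (H2 : is_derive (fun u => f (a + -1 * u)) t (-1 * d (a + -1 * t))) by (apply is_derive_aff; auto).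
  assert (H3 : is_derive (fun u => f (a + 1 * u)) t (-1 * d (a + -1 * t))).
  { eapply is_derive_ext; [|exact H2]. intros u. simpl.
    replace (a + -1 * u) with (a - u) by ring. replace (a + 1 * u) with (a + u) by ring.
    symmetry. apply Hs. }
  pose proof (derive_uniq _ _ _ _ H1 H3).
  replace (a + 1 * t) with (a + t) in H by ring. replace (a + -1 * t) with (a - t) in H by ring.
  lra.
Qed.

Lemma d_psym (f d : R -> R) (a c : R) : (forall t, is_derive f t (d t)) -> psym_about f a c ->
  forall t, d (a + t) = d (a - t).
Proof.
  intros Hd Hs t.
  assert (H1 : is_derive (fun u => f (a + 1 * u)) t (1 * d (a + 1 * t))) by (apply is_derive_aff; auto).
  assert (H2 : is_derive (fun u => f (a + -1 * u)) t (-1 * d (a + -1 * t))) by (apply is_derive_aff; auto).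
  assert (H2' : is_derive (fun u => 2 * c - f (a + -1 * u)) t (0 - -1 * d (a + -1 * t))).
  { assert (Hc : is_derive (fun _ : R => 2 * c) t 0) by (auto_derive; auto).
    apply (is_derive_minus (fun _ => 2 * c)). exact Hc. auto. }
  assert (H3 : is_derive (fun u => f (a + 1 * u)) t (0 - -1 * d (a + -1 * t))).
  { eapply is_derive_ext; [|exact H2']. intros u. simpl.
    replace (a + -1 * u) with (a - u) by ring. replace (a + 1 * u) with (a + u) by ring.
    rewrite <- (Hs u). ring. }
  pose proof (derive_uniq _ _ _ _ H1 H3).
  replace (a + 1 * t) with (a + t) in H by ring. replace (a + -1 * t) with (a - t) in H by ring.
  lra.
Qed.

Lemma d_per (f d : R -> R) (T : R) : (forall t, is_derive f t (d t)) -> (forall t, f (t + T) = f t + 0 * T) ->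
  forall t, d (t + T) = d t.
Proof.
  intros Hd Hs t.
  assert (H1 : is_derive (fun u => f (u + T)) t (d (t + T))) by (apply is_derive_tr; auto).
  assert (H2 : is_derive (fun u => f (u + T)) t (d t)).
  { eapply is_derive_ext; [|exact (Hd t)]. intros u. simpl. rewrite Hs. ring. }
  exact (derive_uniq _ _ _ _ H1 H2).
Qed.

Lemma d_per2 (f d : R -> R) (T q : R) : (forall t, is_derive f t (d t)) -> (forall t, f (t + T) = f t + q) ->
  forall t, d (t + T) = d t.
Proof.
  intros Hd Hs t.
  assert (H1 : is_derive (fun u => f (u + T)) t (d (t + T))) by (apply is_derive_tr; auto).
  assert (H2 : is_derive (fun u => f u + q) t (d t + 0)).
  { assert (Hc : is_derive (fun _ : R => q) t 0) by (auto_derive; auto).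
    apply (is_derive_plus f (fun _ => q)). auto. exact Hc. }
  assert (H3 : is_derive (fun u => f (u + T)) t (d t + 0)).
  { eapply is_derive_ext; [|exact H2]. intros u. simpl. rewrite Hs. auto. }
  pose proof (derive_uniq _ _ _ _ H1 H3). lra.
Qed.

Lemma incr_bounds f a b s : strictly_incr_on f a b -> a <= s <= b -> f a <= f s <= f b.
Proof.
  intros H [H1 H2]. split.
  - destruct (Rle_lt_or_eq_dec _ _ H1). left; apply H; lra. subst; lra.
  - destruct (Rle_lt_or_eq_dec _ _ H2). left; apply H; lra. subst; lra.
Qed.
Lemma decr_bounds f a b s : strictly_decr_on f a b -> a <= s <= b -> f b <= f s <= f a.
Proof.
  intros H [H1 H2]. split.
  - destruct (Rle_lt_or_eq_dec _ _ H2). left; apply H; lra. subst; lra.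
  - destruct (Rle_lt_or_eq_dec _ _ H1). left; apply H; lra. subst; lra.
Qed.

Lemma decr_incr_neg f g a b : (forall t, g t = - f t) ->
  (strictly_decr_on f a b <-> strictly_incr_on g a b).
Proof.
  intros E. unfold strictly_decr_on, strictly_incr_on. split; intros H x y H1 H2 H3;
  specialize (H x y H1 H2 H3); rewrite ?E in *; lra.
Qed.
Lemma incr_ext f g a b : (forall t, g t = f t) ->
  (strictly_incr_on f a b <-> strictly_incr_on g a b).
Proof.
  intros E. unfold strictly_incr_on. split; intros H x y H1 H2 H3;
  specialize (H x y H1 H2 H3); rewrite ?E in *; lra.
Qed.
Lemma div_rel (p q s e : R) : 0 < s -> p / s = e * (q / s) -> p = e * q.
Proof.
  intros Hs H. apply Rmult_eq_reg_r with (/ s); [|apply Rinv_neq_0_compat; lra].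
  unfold Rdiv in H. rewrite H. ring.
Qed.

Lemma sin_pi_minus x : sin (PI - x) = sin x.
Proof. rewrite sin_minus, sin_PI, cos_PI. ring. Qed.
Lemma cos_pi_minus x : cos (PI - x) = - cos x.
Proof. rewrite cos_minus, sin_PI, cos_PI. ring. Qed.
Ltac rg := first [lra | (unfold Rdiv; ring) | field].
Lemma scalR (a b : R) : scal a b = a * b.
Proof. reflexivity. Qed.

Lemma c32 : cos (3 * (PI/2)) = 0 /\ sin (3 * (PI/2)) = -1.
Proof.
  replace (3 * (PI/2)) with (PI + PI/2) by lra.
  rewrite cos_plus, sin_plus, cos_PI, sin_PI, cos_PI2, sin_PI2. split; lra.
Qed.

Section W.
Variable T : R.
Hypothesis HT : 0 < T.
Let w := 2 * PI / T.

Lemma wa (a t : R) : w * (a * T + t) = a * (2 * PI) + w * t.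
Proof. unfold w. field. lra. Qed.

Lemma cw_per t : cos (w * (t + T)) = cos (w * t).
Proof. replace (w * (t + T)) with (w * t + 2 * PI) by (unfold w; field; lra). apply cos_2PI_plus. Qed.
Lemma sw_per t : sin (w * (t + T)) = sin (w * t).
Proof. replace (w * (t + T)) with (w * t + 2 * PI) by (unfold w; field; lra). apply sin_2PI_plus. Qed.
Lemma cw_0 t : cos (w * (0 + t)) = cos (w * (0 - t)).
Proof. replace (w * (0 - t)) with (- (w * (0 + t))) by lra. rewrite cos_neg; auto. Qed.
Lemma sw_0 t : sin (w * (0 + t)) + sin (w * (0 - t)) = 2 * 0.
Proof. replace (w * (0 - t)) with (- (w * (0 + t))) by lra. rewrite sin_neg; lra. Qed.
Lemma cw_2 t : cos (w * (T/2 + t)) = cos (w * (T/2 - t)).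
Proof.
  replace (w * (T/2 + t)) with (PI + w * t) by (unfold w; field; lra).
  replace (w * (T/2 - t)) with (PI - w * t) by (unfold w; field; lra).
  rewrite cos_plus, cos_minus, cos_PI, sin_PI. lra.
Qed.
Lemma sw_2 t : sin (w * (T/2 + t)) + sin (w * (T/2 - t)) = 2 * 0.
Proof.
  replace (w * (T/2 + t)) with (PI + w * t) by (unfold w; field; lra).
  replace (w * (T/2 - t)) with (PI - w * t) by (unfold w; field; lra).
  rewrite sin_plus, sin_minus, cos_PI, sin_PI. lra.
Qed.
Lemma cw_1 t : cos (w * (T/4 + t)) + cos (w * (T/4 - t)) = 2 * 0.
Proof.
  replace (w * (T/4 + t)) with (PI/2 + w * t) by (unfold w; field; lra).
  replace (w * (T/4 - t)) with (PI/2 - w * t) by (unfold w; field; lra).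
  rewrite cos_plus, cos_minus, cos_PI2, sin_PI2. lra.
Qed.
Lemma sw_1 t : sin (w * (T/4 + t)) = sin (w * (T/4 - t)).
Proof.
  replace (w * (T/4 + t)) with (PI/2 + w * t) by (unfold w; field; lra).
  replace (w * (T/4 - t)) with (PI/2 - w * t) by (unfold w; field; lra).
  rewrite sin_plus, sin_minus, cos_PI2, sin_PI2. lra.
Qed.
Lemma cw_3 t : cos (w * (3*T/4 + t)) + cos (w * (3*T/4 - t)) = 2 * 0.
Proof.
  replace (w * (3*T/4 + t)) with (3*(PI/2) + w * t) by (unfold w; field; lra).
  replace (w * (3*T/4 - t)) with (3*(PI/2) - w * t) by (unfold w; field; lra).
  destruct c32 as [C S].
  rewrite cos_plus, cos_minus, C, S. lra.
Qed.
Lemma sw_3 t : sin (w * (3*T/4 + t)) = sin (w * (3*T/4 - t)).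
Proof.
  replace (w * (3*T/4 + t)) with (3*(PI/2) + w * t) by (unfold w; field; lra).
  replace (w * (3*T/4 - t)) with (3*(PI/2) - w * t) by (unfold w; field; lra).
  destruct c32 as [C S].
  rewrite sin_plus, sin_minus, C, S. lra.
Qed.
End W.

Lemma div_zero_iff p s : 0 < s -> (p / s = 0 <-> p = 0).
Proof.
  intros Hs. split; intro H.
  - replace p with ((p / s) * s) by (field; lra). rewrite H; lra.
  - rewrite H. unfold Rdiv. lra.
Qed.
Lemma div_pos_iff p s : 0 < s -> (0 < p / s <-> 0 < p).
Proof.
  intros Hs. split; intro H.
  - replace p with ((p / s) * s) by (field; lra). apply Rmult_lt_0_compat; lra.
  - apply Rdiv_lt_0_compat; lra.
Qed.
Lemma mul_zero_iff c p : 0 < c -> (c * p = 0 <-> p = 0).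
Proof.
  intros Hc. split; intro H.
  - destruct (Rmult_integral _ _ H); lra.
  - rewrite H; lra.
Qed.
Lemma mul_pos_iff c p : 0 < c -> (0 < c * p <-> 0 < p).
Proof.
  intros Hc. split; intro H.
  - destruct (Rlt_or_le 0 p); auto. nra.
  - nra.
Qed.
Theorem mainTheorem3 (n : nat) (T r0 : R) (ro tho alo : R -> R) :
  (1 < n)%nat ->
  0 < T -> 0 < r0 < PI ->
  solves_system n ro tho alo ->
  tho 0 = PI / 4 -> ro 0 = r0 -> alo 0 = - (PI / 2) ->
  tho (T / 4) > 0 -> ro (T / 4) = PI / 2 -> alo (T / 4) = 0 ->
  strictly_decr_on tho 0 (T / 4) ->
  strictly_incr_on ro 0 (T / 4) ->
  strictly_incr_on alo 0 (T / 4) ->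
  sym_about tho (T / 4) -> sym_about tho (3 * T / 4) ->
  psym_about tho (T / 2) (PI / 4) -> psym_about tho 0 (PI / 4) ->
  sym_about ro 0 -> sym_about ro (T / 2) ->
  psym_about ro (T / 4) (PI / 2) -> psym_about ro (3 * T / 4) (PI / 2) ->
  periodic tho T -> periodic ro T ->
  (forall t, alo (t + T) = alo t + 2 * PI) ->
  let r := fun t => ro (t + T / 4) in
  let th := fun t => tho (t + T / 4) in
  let al := fun t => alo (t + T / 4) in
  let th0 := th 0 in
  let f_th := fun t => PI / 4 - (PI / 4 - th0) * cos (2 * PI / T * t) in
  let f_r := fun t => PI / 2 + (PI / 2 - r0) * sin (2 * PI / T * t) in
  (* (i) *)
  (theta_syms th T /\ theta_syms f_th T /\
   same_critical_points th f_th /\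
   (forall t, Derive th t > 0 <-> Derive f_th t > 0)) /\
  (* (ii) *)
  (r_syms r T /\ r_syms f_r T /\
   same_critical_points r f_r /\
   (forall t, Derive r t > 0 <-> Derive f_r t > 0)) /\
  (* (iii) *)
  (cos_syms (fun t => cos (al t)) T /\
   cos_syms (fun t => cos (2 * PI / T * t)) T /\
   same_critical_points (fun t => cos (al t)) (fun t => cos (2 * PI / T * t)) /\
   same_monotonicity (fun t => cos (al t)) (fun t => cos (2 * PI / T * t))) /\
  (* (iv) *)
  (sin_syms (fun t => sin (al t)) T /\
   sin_syms (fun t => sin (2 * PI / T * t)) T /\
   same_critical_points (fun t => sin (al t)) (fun t => sin (2 * PI / T * t)) /\
   same_monotonicity (fun t => sin (al t)) (fun t => sin (2 * PI / T * t))).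

Proof.
  intros Hn HT Hr0 Hsys Ht0 Hr00 Ha0 HtT4 HrT4 HaT4 Hdt Hir Hia Hts1 Hts3 Htp2 Htp0
    Hrs0 Hrs2 Hrp1 Hrp3 Htper Hrper Haper r th al th0 f_th f_r.
  pose proof PI_RGT_0 as HPI.
  assert (HnR : 2 <= INR n) by (apply (le_INR 2); lia).
  set (A := fun t => (2 * INR n - 2) * / sin (ro t) * cos (alo t) * cot (2 * tho t)
       - (2 * INR n - 1) * cot (ro t) * sin (alo t)).
  assert (Dr : forall t, is_derive ro t (cos (alo t))) by (intro t; apply (Hsys t)).
  assert (Dt : forall t, is_derive tho t (sin (alo t) / sin (ro t))) by (intro t; apply (Hsys t)).
  assert (Da : forall t, is_derive alo t (A t)) by (intro t; apply (Hsys t)).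
  assert (Hr0PI2 : r0 < PI/2) by (rewrite <- Hr00, <- HrT4; apply Hir; lra).
  assert (Hth4 : tho (T/4) < PI/4) by (rewrite <- Ht0; apply Hdt; lra).
  assert (Rq : forall s, 0 <= s <= T/4 -> r0 <= ro s <= PI/2).
  { intros s Hs. rewrite <- Hr00, <- HrT4. apply (incr_bounds ro 0 (T/4)); auto. }
  assert (Rh : forall s, -(T/4) <= s <= T/4 -> r0 <= ro s <= PI/2).
  { intros s Hs. destruct (Rle_or_lt 0 s). apply Rq; lra.
    replace s with (0 - (-s)) by ring. rewrite <- (Hrs0 (-s)).
    replace (0 + -s) with (-s) by ring. apply Rq; lra. }
  assert (Rf : forall s, -(T/4) <= s < 3*T/4 -> r0 <= ro s <= PI - r0).
  { intros s Hs. destruct (Rle_or_lt s (T/4)). pose proof (Rh s). lra.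
    pose proof (Hrp1 (s - T/4)) as E. replace (T/4 + (s - T/4)) with s in E by ring.
    assert (Hx := Rh (T/4 - (s - T/4)) ltac:(lra)). lra. }
  assert (Rall : forall t, r0 <= ro t <= PI - r0).
  { intros t. destruct (floorZ T (t + T/4) HT) as [k Hk].
    rewrite <- (Zper ro T Hrper k t). apply Rf. lra. }
  assert (Sro : forall t, 0 < sin (ro t)) by (intro t; apply sin_gt_0; pose proof (Rall t); lra).
  assert (S1 := d_sym ro (fun t => cos (alo t)) 0 Dr Hrs0). cbv beta in S1.
  assert (S2 := d_sym ro (fun t => cos (alo t)) (T/2) Dr Hrs2). cbv beta in S2.
  assert (S3 := d_psym ro (fun t => cos (alo t)) (T/4) (PI/2) Dr Hrp1). cbv beta in S3.
  assert (S4 := d_psym ro (fun t => cos (alo t)) (3*T/4) (PI/2) Dr Hrp3). cbv beta in S4.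
  assert (Q0 := d_psym tho _ 0 (PI/4) Dt Htp0). cbv beta in Q0.
  assert (Q1 := d_sym tho _ (T/4) Dt Hts1). cbv beta in Q1.
  assert (Q2 := d_psym tho _ (T/2) (PI/4) Dt Htp2). cbv beta in Q2.
  assert (Q3 := d_sym tho _ (3*T/4) Dt Hts3). cbv beta in Q3.
  assert (SR1 : forall t, sin (ro (T/4 + t)) = sin (ro (T/4 - t))).
  { intro t. pose proof (Hrp1 t). replace (ro (T/4 + t)) with (PI - ro (T/4 - t)) by lra.
    apply sin_pi_minus. }
  assert (CR1 : forall t, cos (ro (T/4 + t)) = - cos (ro (T/4 - t))).
  { intro t. pose proof (Hrp1 t). replace (ro (T/4 + t)) with (PI - ro (T/4 - t)) by lra.
    apply cos_pi_minus. }
  assert (SR3 : forall t, sin (ro (3*T/4 + t)) = sin (ro (3*T/4 - t))).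
  { intro t. pose proof (Hrp3 t). replace (ro (3*T/4 + t)) with (PI - ro (3*T/4 - t)) by lra.
    apply sin_pi_minus. }
  assert (SA0 : forall t, sin (alo (0 + t)) = sin (alo (0 - t))).
  { intro t. specialize (Q0 t). rewrite (Hrs0 t) in Q0.
    replace (sin (alo (0 - t))) with (1 * sin (alo (0 - t))) by ring.
    apply (div_rel _ _ _ _ (Sro (0 - t))). rewrite Q0; ring. }
  assert (SA1 : forall t, sin (alo (T/4 + t)) = - sin (alo (T/4 - t))).
  { intro t. specialize (Q1 t). rewrite (SR1 t) in Q1.
    replace (- sin (alo (T/4 - t))) with ((-1) * sin (alo (T/4 - t))) by ring.
    apply (div_rel _ _ _ _ (Sro (T/4 - t))). rewrite Q1; ring. }
  assert (SA2 : forall t, sin (alo (T/2 + t)) = sin (alo (T/2 - t))).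
  { intro t. specialize (Q2 t). rewrite (Hrs2 t) in Q2.
    replace (sin (alo (T/2 - t))) with (1 * sin (alo (T/2 - t))) by ring.
    apply (div_rel _ _ _ _ (Sro (T/2 - t))). rewrite Q2; ring. }
  assert (SA3 : forall t, sin (alo (3*T/4 + t)) = - sin (alo (3*T/4 - t))).
  { intro t. specialize (Q3 t). rewrite (SR3 t) in Q3.
    replace (- sin (alo (3*T/4 - t))) with ((-1) * sin (alo (3*T/4 - t))) by ring.
    apply (div_rel _ _ _ _ (Sro (3*T/4 - t))). rewrite Q3; ring. }
  assert (A1 : forall t, A (T/4 + t) = A (T/4 - t)).
  { intro t. unfold A, cot. rewrite (SR1 t), (CR1 t), (S3 t), (Hts1 t), (SA1 t). rg. }
  assert (A0 : forall t, A (0 + t) = A (0 - t)).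
  { intro t. unfold A, cot. rewrite (Hrs0 t), (S1 t), (SA0 t).
    pose proof (Htp0 t) as E. replace (2 * tho (0 + t)) with (PI - 2 * tho (0 - t)) by lra.
    rewrite sin_pi_minus, cos_pi_minus. unfold Rdiv. rg. }
  assert (Ahalf : forall t, A (t + T/2) = A t).
  { intro t. replace (t + T/2) with (T/4 + (T/4 + t)) by field.
    rewrite A1. replace (T/4 - (T/4 + t)) with (0 - t) by rg.
    rewrite <- A0. f_equal. rg. }
  assert (Aq : forall s, 0 <= s <= T/4 -> 0 < A s).
  { intros s Hs.
    assert (Ba := incr_bounds alo 0 (T/4) s Hia Hs). rewrite Ha0, HaT4 in Ba.
    assert (Bt := decr_bounds tho 0 (T/4) s Hdt Hs). rewrite Ht0 in Bt.
    assert (Br := Rq s Hs). pose proof (Sro s) as Hsr.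
    destruct (Rle_lt_or_eq_dec _ _ (proj2 Hs)) as [Hlt|Heq].
    - assert (Ha1 : alo s < 0) by (rewrite <- HaT4; apply Hia; lra).
      assert (Hr1 : ro s < PI/2) by (rewrite <- HrT4; apply Hir; lra).
      assert (P1 : 0 <= (2 * INR n - 2) * / sin (ro s) * cos (alo s) * cot (2 * tho s)).
      { unfold cot. repeat apply Rmult_le_pos; try lra.
        - left; apply Rinv_0_lt_compat; auto.
        - apply cos_ge_0; lra.
        - apply cos_ge_0; lra.
        - left; apply Rinv_0_lt_compat; apply sin_gt_0; lra. }
      assert (P2 : 0 < (2 * INR n - 1) * cot (ro s)).
      { unfold cot. apply Rmult_lt_0_compat. lra. apply Rmult_lt_0_compat.
        apply cos_gt_0; lra. apply Rinv_0_lt_compat; auto. }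
      assert (P3 : sin (alo s) < 0) by (apply sin_lt_0_var; lra).
      unfold A. nra.
    - subst s. unfold A. rewrite HaT4, HrT4, cos_0, sin_0, sin_PI2.
      assert (0 < cot (2 * tho (T/4))).
      { unfold cot. apply Rmult_lt_0_compat. apply cos_gt_0; lra.
        apply Rinv_0_lt_compat; apply sin_gt_0; lra. }
      rewrite Rinv_1. nra. }
  assert (Apos : forall t, 0 < A t).
  { intro t. destruct (floorZ (T/2) t ltac:(lra)) as [k Hk].
    rewrite <- (Zper A (T/2) Ahalf k t). set (s := t + IZR k * (T/2)) in *.
    destruct (Rle_or_lt s (T/4)). apply Aq; lra.
    replace s with (T/4 + (s - T/4)) by rg. rewrite A1. apply Aq; lra. }
  assert (Ainc : forall x y, x < y -> alo x < alo y).
  { intros x y Hxy. apply (incr_function_le alo m_infty p_infty A); try (intros; apply Da); try (intros; apply Apos); simpl; auto. }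
  assert (AT : alo T = 3 * (PI/2)).
  { pose proof (Haper 0) as E. replace (0 + T) with T in E by rg. rewrite Ha0 in E. lra. }
  assert (AT2 : alo (T/2) = PI/2).
  { pose proof (S2 0) as E. replace (T/2 + 0) with (T/2) in E by rg.
    replace (T/2 - 0) with (T/2) in E by rg.
    assert (Ec : cos (alo (T/2)) = 0) by lra.
    destruct (cos_eq_0_0 _ Ec) as [k Hk].
    assert (L1 : alo (T/4) < alo (T/2)) by (apply Ainc; lra).
    assert (L2 : alo (T/2) < alo T) by (apply Ainc; lra).
    rewrite HaT4 in L1. rewrite AT in L2.
    assert (K1 : IZR k < 1) by (apply Rmult_lt_reg_r with PI; lra).
    assert (K2 : -1 < IZR k) by (apply Rmult_lt_reg_r with PI; lra).
    apply lt_IZR in K1. apply lt_IZR in K2. assert (k = 0%Z) by lia. subst k. lra. }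
  assert (AT3 : alo (3*T/4) = PI).
  { pose proof (SA3 0) as E. replace (3*T/4 + 0) with (3*T/4) in E by rg.
    replace (3*T/4 - 0) with (3*T/4) in E by rg.
    assert (Ec : sin (alo (3*T/4)) = 0) by lra.
    destruct (sin_eq_0_0 _ Ec) as [k Hk].
    assert (L1 : alo (T/2) < alo (3*T/4)) by (apply Ainc; lra).
    assert (L2 : alo (3*T/4) < alo T) by (apply Ainc; lra).
    rewrite AT2 in L1. rewrite AT in L2.
    assert (K1 : IZR k < 2) by (apply Rmult_lt_reg_r with PI; lra).
    assert (K2 : 0 < IZR k) by (apply Rmult_lt_reg_r with PI; lra).
    apply lt_IZR in K1. apply lt_IZR in K2. assert (k = 1%Z) by lia. subst k. lra. }
  assert (Aval : forall k : Z, alo (T/4 + IZR k * (T/4)) = IZR k * (PI/2)).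
  { intro k. pose proof (Z.div_mod k 4 ltac:(lia)) as Ek.
    pose proof (Z.mod_pos_bound k 4 ltac:(lia)) as Bk.
    set (q := (k / 4)%Z) in *. set (j := (k mod 4)%Z) in *.
    rewrite Ek, plus_IZR, mult_IZR.
    replace (T / 4 + (IZR 4 * IZR q + IZR j) * (T / 4)) with ((T/4 + IZR j * (T/4)) + IZR q * T) by (simpl; field).
    rewrite (Zadd alo T (2*PI) Haper q).
    assert (j = 0 \/ j = 1 \/ j = 2 \/ j = 3)%Z as Hj by lia.
    destruct Hj as [Hj|[Hj|[Hj|Hj]]]; rewrite Hj; simpl IZR.
    - replace (T/4 + 0 * (T/4)) with (T/4) by rg. rewrite HaT4. lra.
    - replace (T/4 + 1 * (T/4)) with (T/2) by field. rewrite AT2. lra.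
    - replace (T/4 + 2 * (T/4)) with (3*T/4) by field. rewrite AT3. lra.
    - replace (T/4 + 3 * (T/4)) with T by field. rewrite AT. lra. }
  assert (Hal : Hh al 0 T).
  { split.
    - intros x y Hxy. unfold al. apply Ainc. lra.
    - intro k. unfold al. rewrite <- Aval. f_equal. rg. }
  assert (Hom : Hh (fun t => 2 * PI / T * t) 0 T).
  { split.
    - intros x y Hxy. apply Rmult_lt_compat_l; auto. apply Rdiv_lt_0_compat; lra.
    - intro k. field. lra. }
  assert (Hw : 0 < 2 * PI / T) by (apply Rdiv_lt_0_compat; lra).
  assert (Hth0 : th0 = tho (T/4)) by (unfold th0, th; f_equal; rg).
  assert (C1 : 0 < PI/4 - th0) by lra.
  assert (C2 : 0 < PI/2 - r0) by lra.
  assert (Dth' : forall t, Derive th t = sin (al t) / sin (ro (t + T/4))).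
  { intro t. apply is_derive_unique. apply is_derive_tr. apply Dt. }
  assert (Dr' : forall t, Derive r t = cos (al t)).
  { intro t. apply is_derive_unique. apply is_derive_tr. apply Dr. }
  assert (Dal : forall t, is_derive al t (A (t + T/4))).
  { intro t. apply is_derive_tr. apply Da. }
  assert (Dcal : forall t, Derive (fun t => cos (al t)) t = A (t + T/4) * - sin (al t)).
  { intro t. apply is_derive_unique. rewrite <- scalR. apply (is_derive_comp cos al).
    auto_derive; auto; rg. apply Dal. }
  assert (Dsal : forall t, Derive (fun t => sin (al t)) t = A (t + T/4) * cos (al t)).
  { intro t. apply is_derive_unique. rewrite <- scalR. apply (is_derive_comp sin al).
    auto_derive; auto; rg. apply Dal. }
  assert (Dfth : forall t, Derive f_th t = (PI/4 - th0) * (2 * PI / T) * sin (2 * PI / T * t)).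
  { intro t. apply is_derive_unique. unfold f_th. auto_derive; auto. rg. }
  assert (Dfr : forall t, Derive f_r t = (PI/2 - r0) * (2 * PI / T) * cos (2 * PI / T * t)).
  { intro t. apply is_derive_unique. unfold f_r. auto_derive; auto. rg. }
  assert (Dcw : forall t, Derive (fun t => cos (2 * PI / T * t)) t = (2 * PI / T) * - sin (2 * PI / T * t)).
  { intro t. apply is_derive_unique. auto_derive; auto. rg. }
  assert (Dsw : forall t, Derive (fun t => sin (2 * PI / T * t)) t = (2 * PI / T) * cos (2 * PI / T * t)).
  { intro t. apply is_derive_unique. auto_derive; auto. rg. }
  assert (Tcz : forall t, cos (al t) = 0 <-> cos (2 * PI / T * t) = 0).
  { intro t. exact (cos_zero_transfer al (fun t => 2 * PI / T * t) 0 T t Hal Hom). }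
  assert (Tcp : forall t, 0 < cos (al t) <-> 0 < cos (2 * PI / T * t)).
  { intro t. exact (cos_pos_transfer al (fun t => 2 * PI / T * t) 0 T t Hal Hom). }
  assert (Tsz : forall t, sin (al t) = 0 <-> sin (2 * PI / T * t) = 0).
  { intro t. pose proof (cos_zero_transfer _ _ _ T t (Hh_shift _ _ _ (-1) Hal) (Hh_shift _ _ _ (-1) Hom)) as X.
    cbv beta in X. rewrite !cos_mPI2 in X. exact X. }
  assert (Tsp : forall t, 0 < sin (al t) <-> 0 < sin (2 * PI / T * t)).
  { intro t. pose proof (cos_pos_transfer _ _ _ T t (Hh_shift _ _ _ (-1) Hal) (Hh_shift _ _ _ (-1) Hom)) as X.
    cbv beta in X. rewrite !cos_mPI2 in X. exact X. }
  assert (Alp : forall t, 0 < A (t + T/4)) by (intro; apply Apos).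
  split; [|split; [|split]].
  -
    split; [|split; [|split]].
    + unfold theta_syms, periodic, sym_about, psym_about, th. repeat split; intro t.
      * replace (t + T + T/4) with ((t + T/4) + T) by rg. apply Htper.
      * replace (0 + t + T/4) with (T/4 + t) by rg. replace (0 - t + T/4) with (T/4 - t) by rg. apply Hts1.
      * replace (T/2 + t + T/4) with (3*T/4 + t) by rg. replace (T/2 - t + T/4) with (3*T/4 - t) by rg. apply Hts3.
      * replace (T/4 + t + T/4) with (T/2 + t) by rg. replace (T/4 - t + T/4) with (T/2 - t) by rg. apply Htp2.
      * replace (3*T/4 + t + T/4) with ((0 + t) + T) by rg. replace (3*T/4 - t + T/4) with ((0 - t) + T) by rg.
        rewrite !Htper. apply Htp0.
    + unfold theta_syms, periodic, sym_about, psym_about, f_th. repeat split; intro t.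
      * rewrite (cw_per T HT). auto.
      * rewrite (cw_0 T t). auto.
      * rewrite (cw_2 T HT t). auto.
      * pose proof (cw_1 T HT t). replace (cos (2 * PI / T * (T / 4 + t))) with (- cos (2 * PI / T * (T / 4 - t))) by lra. rg.
      * pose proof (cw_3 T HT t). replace (cos (2 * PI / T * (3 * T / 4 + t))) with (- cos (2 * PI / T * (3 * T / 4 - t))) by lra. rg.
    + intro t. rewrite Dth', Dfth, (div_zero_iff _ _ (Sro _)).
      rewrite (mul_zero_iff _ _ (Rmult_lt_0_compat _ _ C1 Hw)). apply Tsz.
    + intro t. rewrite Dth', Dfth. unfold Rgt. rewrite (div_pos_iff _ _ (Sro _)).
      rewrite (mul_pos_iff _ _ (Rmult_lt_0_compat _ _ C1 Hw)). apply Tsp.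
  -
    split; [|split; [|split]].
    + unfold r_syms, periodic, sym_about, psym_about, r. repeat split; intro t.
      * replace (t + T + T/4) with ((t + T/4) + T) by rg. apply Hrper.
      * replace (T/4 + t + T/4) with (T/2 + t) by rg. replace (T/4 - t + T/4) with (T/2 - t) by rg. apply Hrs2.
      * replace (3*T/4 + t + T/4) with ((0 + t) + T) by rg. replace (3*T/4 - t + T/4) with ((0 - t) + T) by rg.
        rewrite !Hrper. apply Hrs0.
      * replace (0 + t + T/4) with (T/4 + t) by rg. replace (0 - t + T/4) with (T/4 - t) by rg. apply Hrp1.
      * replace (T/2 + t + T/4) with (3*T/4 + t) by rg. replace (T/2 - t + T/4) with (3*T/4 - t) by rg. apply Hrp3.
    + unfold r_syms, periodic, sym_about, psym_about, f_r. repeat split; intro t.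
      * rewrite (sw_per T HT). auto.
      * rewrite (sw_1 T HT t). auto.
      * rewrite (sw_3 T HT t). auto.
      * pose proof (sw_0 T t). replace (sin (2 * PI / T * (0 + t))) with (- sin (2 * PI / T * (0 - t))) by lra. rg.
      * pose proof (sw_2 T HT t). replace (sin (2 * PI / T * (T / 2 + t))) with (- sin (2 * PI / T * (T / 2 - t))) by lra. rg.
    + intro t. rewrite Dr', Dfr.
      rewrite (mul_zero_iff _ _ (Rmult_lt_0_compat _ _ C2 Hw)). apply Tcz.
    + intro t. rewrite Dr', Dfr. unfold Rgt.
      rewrite (mul_pos_iff _ _ (Rmult_lt_0_compat _ _ C2 Hw)). apply Tcp.
  -
    split; [|split; [|split]].
    + unfold cos_syms, periodic, sym_about, psym_about, al. repeat split; intro t.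
      * replace (t + T + T/4) with ((t + T/4) + T) by rg. rewrite Haper. apply cos_2PI_plus.
      * replace (0 + t + T/4) with (T/4 + t) by rg. replace (0 - t + T/4) with (T/4 - t) by rg. apply S3.
      * replace (T/2 + t + T/4) with (3*T/4 + t) by rg. replace (T/2 - t + T/4) with (3*T/4 - t) by rg. apply S4.
      * replace (T/4 + t + T/4) with (T/2 + t) by rg. replace (T/4 - t + T/4) with (T/2 - t) by rg. rewrite S2. lra.
      * replace (3*T/4 + t + T/4) with ((0 + t) + T) by rg. replace (3*T/4 - t + T/4) with ((0 - t) + T) by rg.
        rewrite !Haper, !cos_2PI_plus, S1. lra.
    + unfold cos_syms, periodic, sym_about, psym_about. repeat split; intro t.
      * apply (cw_per T HT).
      * apply (cw_0 T t).
      * apply (cw_2 T HT t).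
      * apply (cw_1 T HT t).
      * apply (cw_3 T HT t).
    + intro t. rewrite Dcal, Dcw.
      rewrite (mul_zero_iff _ _ (Alp t)), (mul_zero_iff _ _ Hw).
      split; intro H. apply Ropp_eq_0_compat in H. rewrite Ropp_involutive in H.
      rewrite (proj1 (Tsz t) H). lra.
      apply Ropp_eq_0_compat in H. rewrite Ropp_involutive in H.
      rewrite (proj2 (Tsz t) H). lra.
    + intros a b Hab. split.
      * exact (cos_incr_transfer al (fun t => 2 * PI / T * t) 0 T a b Hal Hom HT Hab).
      * rewrite (decr_incr_neg _ (fun t => cos (al t + IZR 2 * (PI/2))) a b).
        rewrite (decr_incr_neg _ (fun t => cos (2 * PI / T * t + IZR 2 * (PI/2))) a b).
        exact (cos_incr_transfer _ _ _ T a b (Hh_shift _ _ _ 2 Hal) (Hh_shift _ _ _ 2 Hom) HT Hab).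
        intro t. replace (2 * PI / T * t + IZR 2 * (PI/2)) with (2 * PI / T * t + PI) by (simpl IZR; lra). apply neg_cos.
        intro t. replace (al t + IZR 2 * (PI/2)) with (al t + PI) by (simpl IZR; lra). apply neg_cos.
  -
    split; [|split; [|split]].
    + unfold sin_syms, periodic, sym_about, psym_about, al. repeat split; intro t.
      * replace (t + T + T/4) with ((t + T/4) + T) by rg. rewrite Haper. apply sin_2PI_plus.
      * replace (T/4 + t + T/4) with (T/2 + t) by rg. replace (T/4 - t + T/4) with (T/2 - t) by rg. apply SA2.
      * replace (3*T/4 + t + T/4) with ((0 + t) + T) by rg. replace (3*T/4 - t + T/4) with ((0 - t) + T) by rg.
        rewrite !Haper, !sin_2PI_plus. apply SA0.
      * replace (0 + t + T/4) with (T/4 + t) by rg. replace (0 - t + T/4) with (T/4 - t) by rg. rewrite SA1. lra.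
      * replace (T/2 + t + T/4) with (3*T/4 + t) by rg. replace (T/2 - t + T/4) with (3*T/4 - t) by rg. rewrite SA3. lra.
    + unfold sin_syms, periodic, sym_about, psym_about. repeat split; intro t.
      * apply (sw_per T HT).
      * apply (sw_1 T HT t).
      * apply (sw_3 T HT t).
      * apply (sw_0 T t).
      * apply (sw_2 T HT t).
    + intro t. rewrite Dsal, Dsw.
      rewrite (mul_zero_iff _ _ (Alp t)), (mul_zero_iff _ _ Hw). apply Tcz.
    + intros a b Hab. split.
      * rewrite (incr_ext (fun t => sin (al t)) (fun t => cos (al t + IZR (-1) * (PI/2))) a b).
        rewrite (incr_ext (fun t => sin (2 * PI / T * t)) (fun t => cos (2 * PI / T * t + IZR (-1) * (PI/2))) a b).
        exact (cos_incr_transfer _ _ _ T a b (Hh_shift _ _ _ (-1) Hal) (Hh_shift _ _ _ (-1) Hom) HT Hab).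
        intro t. apply cos_mPI2. intro t. apply cos_mPI2.
      * rewrite (decr_incr_neg _ (fun t => cos (al t + IZR 1 * (PI/2))) a b).
        rewrite (decr_incr_neg _ (fun t => cos (2 * PI / T * t + IZR 1 * (PI/2))) a b).
        exact (cos_incr_transfer _ _ _ T a b (Hh_shift _ _ _ 1 Hal) (Hh_shift _ _ _ 1 Hom) HT Hab).
        intro t. rewrite cos_plus. simpl IZR. rewrite Rmult_1_l, cos_PI2, sin_PI2. lra.
        intro t. rewrite cos_plus. simpl IZR. rewrite Rmult_1_l, cos_PI2, sin_PI2. lra.
Qed.
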